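(* Consider the population game without a central planner, i.e. with threshold $A_t = 1$ for all $t \in [0,T]$. Suppose $g_{eq} \in C[0,T]$ with $g_{eq,t} \in [0,1]$ is a symmetric (Nash) equilibrium exposure profile, i.e. $$J_\alpha(g_{eq}, g_{eq}, 1) \le J_\alpha(g_{eq}, g^\alpha, 1)$$ for every admissible individual strategy $g^\alpha \in C[0,T]$ with $g^\alpha_t\in[0,1]$, and the canonical individual's equilibrium strategy equals $g_{eq}$. Then, by the Pontryagin minimum principle, there is an adjoint function $\lambda$ on $[0,T]$ such that for all $t\in[0,T]$ $$g_{eq,t}=\min\Big(\frac{B}{\beta I_t (C-\lambda_t)},1\Big)\mathbf 1_{\{C>\lambda_t\}}+\mathbf 1_{\{C\le\lambda_t\}},$$ and $(S,I,\lambda)$ satisfy $$\frac{dS_t}{dt}=-\beta g_{eq,t}^2S_tI_t,\qquad \frac{dI_t}{dt}=\beta g_{eq,t}^2S_tI_t-\gamma I_t,\qquad \frac{d\lambda_t}{dt}=g_{eq,t}\big(B-\beta I_t g_{eq,t}(C-\lambda_t)\big),$$ with boundary conditions $S_0=1-\epsilon$, $I_0=\epsilon$, $\lambda_T=-R$.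
   Context: Model: a finite horizon $T>0$; positive real constants $\beta$ (infection probability per interaction), $\gamma$ (recovery rate), $\epsilon$ (initial infected fraction), $B$ (benefit rate per unit exposure), $C$ (one-time cost of infection), $R$ (reward for surviving to $T$). The population plays a symmetric exposure profile $g\in C[0,T]$ and the susceptible and infected fractions evolve by $\dot S_t=-\beta g_t^2S_tI_t$, $\dot I_t=\beta g_t^2S_tI_t-\gamma I_t$, $S_0=1-\epsilon$, $I_0=\epsilon$. A canonical individual $\alpha$ playing $g^\alpha\in C[0,T]$ is infected at a random time $\tau_\alpha$ whose survival probability $P_t:=P(\tau_\alpha>t)$ satisfies $\dot P_t=-\beta g^\alpha_t g_t I_t P_t$, $P_0=1$. A planner strategy is $A\in C[0,T]$ with $A_t\in[0,1]$, and the individual must satisfy $g^\alpha_t, g_t\le A_t$. The individual's cost is $$J_\alpha(g,g^\alpha,A)=\int_0^T P_t\, g^\alpha_t\{-B+C\beta g_tI_t\}\,dt-R\,P_T,$$ equivalently $\mathbb E\big[-\int_0^{T\wedge\tau_\alpha}Bg^\alpha_s\,ds+C\mathbf 1_{\{\tau_\alpha\le T\}}-R\mathbf 1_{\{\tau_\alpha>T\}}\big]$. *)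

(* Defs.v *)
From Stdlib Require Import Reals.
From Coquelicot Require Import Coquelicot.
Open Scope R_scope.

Definition cont_on (T : R) (f : R -> R) : Prop :=
  forall x, 0 <= x <= T ->
    filterlim f (within (fun y => 0 <= y <= T) (locally x)) (locally (f x)).

Definition admissible (T : R) (A f : R -> R) : Prop :=
  cont_on T f /\ forall t, 0 <= t <= T -> 0 <= f t <= A t.

Definition solves_SI (beta gamma eps T : R) (g S I : R -> R) : Prop :=
  cont_on T S /\ cont_on T I /\ S 0 = 1 - eps /\ I 0 = eps /\
  forall t, 0 < t < T ->
    is_derive S t (- beta * (g t)^2 * S t * I t) /\
    is_derive I t (beta * (g t)^2 * S t * I t - gamma * I t).

(* P_t = P(tau_alpha > t) for the individual playing ga against population g. *)
Definition solves_P (beta T : R) (g I ga P : R -> R) : Prop :=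
  cont_on T P /\ P 0 = 1 /\
  forall t, 0 < t < T -> is_derive P t (- beta * ga t * g t * I t * P t).

Definition Jcost (beta B C Rw T : R) (g I ga P : R -> R) : R :=
  RInt (fun t => P t * ga t * (- B + C * beta * g t * I t)) 0 T - Rw * P T.

(* Main.v *)
Require Import Defs.
From Stdlib Require Import Reals Lra.
From Coquelicot Require Import Coquelicot.
Open Scope R_scope.

Definition gc (f : R -> R) := forall x, continuous f x.

Lemma cmul (f g : R -> R) (x:R) : continuous f x -> continuous g x -> continuous (fun y => f y * g y) x.
Proof. intros; now apply (continuous_mult f g). Qed.
Lemma cplus (f g : R -> R) (x:R) : continuous f x -> continuous g x -> continuous (fun y => f y + g y) x.
Proof. intros; now apply (continuous_plus f g). Qed.
Lemma cminus (f g : R -> R) (x:R) : continuous f x -> continuous g x -> continuous (fun y => f y - g y) x.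
Proof. intros; now apply (continuous_minus f g). Qed.
Lemma copp (f : R -> R) (x:R) : continuous f x -> continuous (fun y => - f y) x.
Proof. intros; now apply (continuous_opp f). Qed.
Lemma cinv (f : R -> R) (x:R) : continuous f x -> f x <> 0 -> continuous (fun y => / f y) x.
Proof. intros; now apply continuous_Rinv_comp. Qed.
Lemma cabs (f : R -> R) (x:R) : continuous f x -> continuous (fun y => Rabs (f y)) x.
Proof. intros; apply (continuous_comp f Rabs); auto; apply continuous_Rabs. Qed.
Lemma cexp (f : R -> R) (x:R) : continuous f x -> continuous (fun y => exp (f y)) x.
Proof. intros; now apply continuous_exp_comp. Qed.
Lemma cconst (c x : R) : continuous (fun _ : R => c) x.
Proof. apply continuous_const. Qed.
Lemma cid (x : R) : continuous (fun y : R => y) x.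
Proof. apply continuous_id. Qed.

Lemma ball_R (x d y : R) : ball x d y <-> Rabs (y - x) < d.
Proof. reflexivity. Qed.


Definition clamp (T t : R) := Rmin T (Rmax 0 t).
Definition ext (T : R) (f : R -> R) := fun t => f (clamp T t).

Lemma clamp_in T t : 0 <= T -> 0 <= clamp T t <= T.
Proof. intros; unfold clamp, Rmin, Rmax; repeat destruct Rle_dec; lra. Qed.
Lemma clamp_id T t : 0 <= t <= T -> clamp T t = t.
Proof. intros; unfold clamp, Rmin, Rmax; repeat destruct Rle_dec; lra. Qed.
Lemma clamp_lip T t s : Rabs (clamp T t - clamp T s) <= Rabs (t - s).
Proof. unfold clamp, Rmin, Rmax, Rabs; repeat destruct Rle_dec; repeat destruct Rcase_abs; lra. Qed.

Lemma clamp_cont T x : 0 <= T ->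
  filterlim (clamp T) (locally x) (within (fun y => 0 <= y <= T) (locally (clamp T x))).
Proof.
  intros HT P [d Hd]. unfold filtermap. exists d. intros y Hy.
  apply Hd. 2: apply clamp_in; lra.
  apply ball_R in Hy. apply ball_R.
  eapply Rle_lt_trans. apply clamp_lip. exact Hy.
Qed.

Lemma cont_ext T f : 0 <= T -> cont_on T f -> gc (ext T f).
Proof.
  intros HT Hf x. unfold continuous, ext.
  eapply filterlim_comp. apply clamp_cont; auto. apply Hf. apply clamp_in; auto.
Qed.

Lemma ext_eq T f t : 0 <= t <= T -> ext T f t = f t.
Proof. intros; unfold ext; now rewrite clamp_id. Qed.

Lemma loc_int T t (P : R -> Prop) : 0 < t < T -> (forall y, 0 < y < T -> P y) -> locally t P.
Proof.
  intros Ht HP. apply (locally_interval _ t 0 T); simpl; try lra.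
  intros; apply HP; lra.
Qed.

Lemma deriv_ext T f t l : 0 < t < T -> is_derive f t l -> is_derive (ext T f) t l.
Proof.
  intros Ht Hd. eapply is_derive_ext_loc. 2: exact Hd.
  apply (loc_int T); auto. intros; symmetry; apply ext_eq; lra.
Qed.

Lemma cont_on_gc T f : gc f -> cont_on T f.
Proof.
  intros Hf x _. eapply filterlim_filter_le_1. 2: apply Hf.
  intros P HP. unfold within. eapply filter_imp. 2: exact HP. auto.
Qed.

Lemma ex_RInt_gc f a b : gc f -> ex_RInt f a b.
Proof. intros; apply (ex_RInt_continuous (V:=R_CompleteNormedModule)); auto. Qed.

Lemma deriv_RInt_up f a t : gc f -> is_derive (fun t => RInt f a t) t (f t).
Proof.
  intros Hf. apply is_derive_RInt with a. 2: apply Hf.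
  apply filter_forall; intros; apply (RInt_correct (V:=R_CompleteNormedModule)), ex_RInt_gc; auto.
Qed.

Lemma deriv_RInt_low f b t : gc f -> is_derive (fun t => RInt f t b) t (- f t).
Proof.
  intros Hf. apply (is_derive_RInt' f (fun t => RInt f t b) t b). 2: apply Hf.
  apply filter_forall; intros; apply (RInt_correct (V:=R_CompleteNormedModule)), ex_RInt_gc; auto.
Qed.

Lemma const_int G a b : a <= b -> (forall x, a < x < b -> is_derive G x 0) -> gc G -> G b = G a.
Proof.
  intros Hab Hd Hc.
  destruct (MVT_gen G a b (fun _ => 0)) as [c [_ Hc']].
  - rewrite Rmin_left, Rmax_right by lra. auto.
  - intros; apply continuity_pt_filterlim, Hc.
  - lra.
Qed.

Lemma mono_int G m a b : a <= b -> (forall x, a < x < b -> is_derive G x (m x)) ->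
  (forall x, a <= x <= b -> m x <= 0) -> gc G -> G b <= G a.
Proof.
  intros Hab Hd Hm Hc.
  destruct (MVT_gen G a b m) as [c [Hc1 Hc']].
  - rewrite Rmin_left, Rmax_right by lra. auto.
  - intros; apply continuity_pt_filterlim, Hc.
  - rewrite Rmin_left, Rmax_right in Hc1 by lra.
    specialize (Hm c Hc1). nra.
Qed.

Lemma gc_deriv (G dG : R -> R) : (forall x, is_derive G x (dG x)) -> gc G.
Proof. intros H x. apply (ex_derive_continuous (K:=R_AbsRing) (V:=R_NormedModule)). eexists; apply H. Qed.

Lemma RInt_zero_fun a b : RInt (fun _ => 0) a b = 0.
Proof. rewrite RInt_const. unfold scal; simpl; unfold mult; simpl; ring. Qed.

Lemma RInt_pt f a : RInt f a a = 0.
Proof. rewrite RInt_point. reflexivity. Qed.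

Lemma endpt T f x : 0 < T -> continuous f x -> 0 <= x <= T -> (forall t, 0 < t < T -> f t = 0) -> f x = 0.
Proof.
  intros HT Hc Hx H0.
  destruct (Req_dec (f x) 0) as [E|E]; auto. exfalso.
  assert (He : 0 < Rabs (f x) / 2) by (apply Rabs_pos_lt in E; lra).
  destruct (proj1 (filterlim_locally f (f x)) Hc (mkposreal _ He)) as [d Hd].
  simpl in Hd.
  set (e := Rmin d (T/2) / 2).
  assert (He0 : 0 < e) by (unfold e, Rmin; destruct Rle_dec; destruct d; simpl in *; lra).
  assert (He1 : e < d) by (unfold e, Rmin; destruct Rle_dec; destruct d; simpl in *; lra).
  assert (He2 : e <= T/4) by (unfold e, Rmin; destruct Rle_dec; destruct d; simpl in *; lra).
  destruct (Rle_dec x (T/2)).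
  - specialize (Hd (x + e)). rewrite ball_R in Hd. rewrite ball_R in Hd.
    rewrite H0 in Hd by lra.
    assert (Rabs (0 - f x) < Rabs (f x) / 2). apply Hd. replace (x+e-x) with e by ring. rewrite Rabs_pos_eq; lra.
    rewrite Rabs_minus_sym, Rminus_0_r in H. lra.
  - specialize (Hd (x - e)). rewrite ball_R in Hd. rewrite ball_R in Hd.
    rewrite H0 in Hd by lra.
    assert (Rabs (0 - f x) < Rabs (f x) / 2). apply Hd. replace (x-e-x) with (-e) by ring. rewrite Rabs_Ropp, Rabs_pos_eq; lra.
    rewrite Rabs_minus_sym, Rminus_0_r in H. lra.
Qed.

Lemma zero_int T m : 0 < T -> gc m -> (forall t, 0 <= t <= T -> m t <= 0) -> 0 <= RInt m 0 T ->
  forall t, 0 <= t <= T -> m t = 0.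
Proof.
  intros HT Hm Hle Hi.
  set (F := fun t => RInt m 0 t).
  assert (dF : forall t, is_derive F t (m t)) by (intros; apply deriv_RInt_up; auto).
  assert (cF : gc F) by (apply (gc_deriv F m dF)).
  assert (F0 : forall y, 0 <= y <= T -> F y = 0).
  { intros y Hy.
    assert (F T <= F y) by (apply (mono_int F m); auto; try lra; intros; apply Hle; lra).
    assert (F y <= F 0) by (apply (mono_int F m); auto; try lra; intros; apply Hle; lra).
    unfold F in H, H0 |- *. rewrite RInt_pt in H0. lra. }
  intros t Ht. apply (endpt T m t HT (Hm t) Ht).
  intros s Hs.
  assert (is_derive F s 0).
  { assert (Hc0 : is_derive (fun _ : R => 0) s 0) by (auto_derive; auto).
    eapply is_derive_ext_loc. 2: exact Hc0.
    apply (loc_int T); auto. intros; symmetry; apply F0; lra. }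
  apply is_derive_unique in H. rewrite (is_derive_unique _ _ _ (dF s)) in H. exact H.
Qed.

Lemma dchg (f : R -> R) (x l l' : R) : is_derive f x l -> l = l' -> is_derive f x l'.
Proof. intros H E; now subst. Qed.
Lemma dmul (f g : R -> R) x df dg : is_derive f x df -> is_derive g x dg ->
  is_derive (fun y => f y * g y) x (df * g x + f x * dg).
Proof. intros. apply (is_derive_mult f g); auto. intros; apply Rmult_comm. Qed.
Lemma dexp (f : R -> R) x df : is_derive f x df -> is_derive (fun y => exp (f y)) x (df * exp (f x)).
Proof. intros. apply (is_derive_comp exp f); auto. apply is_derive_exp. Qed.
Lemma dopp (f : R -> R) x df : is_derive f x df -> is_derive (fun y => - f y) x (- df).
Proof. intros. apply (is_derive_opp f); auto. Qed.
Lemma dplus (f g : R -> R) x df dg : is_derive f x df -> is_derive g x dg ->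
  is_derive (fun y => f y + g y) x (df + dg).
Proof. intros. apply (is_derive_plus f g); auto. Qed.
Lemma dminus (f g : R -> R) x df dg : is_derive f x df -> is_derive g x dg ->
  is_derive (fun y => f y - g y) x (df - dg).
Proof. intros. apply (is_derive_minus f g); auto. Qed.
Lemma dconst (c x : R) : is_derive (fun _ => c) x 0.
Proof. auto_derive; auto. Qed.

Lemma pos_lin T I a : 0 < T -> cont_on T I -> gc a ->
  (forall t, 0 < t < T -> is_derive I t (a t * I t)) -> 0 < I 0 -> forall t, 0 <= t <= T -> 0 < I t.
Proof.
  intros HT HI Ha Hd H0 t Ht.
  set (Z := fun t => ext T I t * exp (- RInt a 0 t)).
  assert (ZC : gc Z).
  { intro x. unfold Z. apply cmul. apply cont_ext; auto; lra.
    apply cexp, copp. apply gc_deriv with a. intros; apply deriv_RInt_up; auto. }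
  assert (Zt : Z t = Z 0).
  { apply const_int; auto; try lra. intros x Hx.
    eapply dchg. unfold Z. apply dmul. apply deriv_ext. 2: apply Hd. lra. lra.
    apply dexp, dopp, deriv_RInt_up; auto.
    cbv beta. rewrite ext_eq by lra. change (@eq R (a x * I x * exp (- RInt a 0 x) + I x * (- a x * exp (- RInt a 0 x))) 0). ring. }
  unfold Z in Zt. rewrite RInt_pt, ext_eq, ext_eq in Zt by lra.
  rewrite Ropp_0, exp_0, Rmult_1_r in Zt.
  assert (0 < exp (- RInt a 0 t)) by apply exp_pos.
  nra.
Qed.

Definition Qf (g k : R -> R) t := exp (- RInt (fun s => g s * k s) 0 t).
Definition Lf (T B C Rw : R) (g k : R -> R) t :=
  (- Rw * Qf g k T - RInt (fun s => Qf g k s * g s * (B - k s * C)) t T) / Qf g k t.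

Lemma dQ g k t : gc g -> gc k -> is_derive (Qf g k) t (- (g t * k t) * Qf g k t).
Proof.
  intros Hg Hk. unfold Qf. eapply dchg.
  apply (dexp (fun t => - RInt (fun s => g s * k s) 0 t)).
  apply (dopp (fun t => RInt (fun s => g s * k s) 0 t)).
  apply deriv_RInt_up. intro x; apply cmul; auto. reflexivity.
Qed.

Lemma gcQ g k : gc g -> gc k -> gc (Qf g k).
Proof. intros; eapply gc_deriv; intros; apply dQ; auto. Qed.

Lemma Qpos g k t : 0 < Qf g k t.
Proof. apply exp_pos. Qed.

Lemma dL T B C Rw g k t : gc g -> gc k ->
  is_derive (Lf T B C Rw g k) t (g t * (B - k t * (C - Lf T B C Rw g k t))).
Proof.
  intros Hg Hk. unfold Lf.
  eapply dchg. apply is_derive_div.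
  apply dminus. apply dconst. apply deriv_RInt_low.
  intro x. apply cmul. apply cmul. apply gcQ; auto. auto. apply cminus. apply cconst. apply cmul; auto. apply cconst.
  apply dQ; auto. apply Rgt_not_eq, Qpos.
  assert (0 < Qf g k t) by apply Qpos. cbv beta. field. lra.
Qed.

Lemma gcL T B C Rw g k : gc g -> gc k -> gc (Lf T B C Rw g k).
Proof. intros; eapply gc_deriv; intros; apply dL; auto. Qed.

Lemma LT T B C Rw g k : Lf T B C Rw g k T = - Rw.
Proof. unfold Lf. rewrite RInt_pt. assert (0 < Qf g k T) by apply Qpos. field. lra. Qed.

Lemma identity T B C Rw (g k ga : R -> R) : 0 <= T -> gc g -> gc k -> gc ga ->
  RInt (fun t => Qf ga k t * ga t * (-B + C * k t)) 0 T - Rw * Qf ga k T =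
  Lf T B C Rw g k 0 + RInt (fun t => Qf ga k t * (ga t - g t) * (-B + k t * (C - Lf T B C Rw g k t))) 0 T.
Proof.
  intros HT Hg Hk Hga.
  set (L := Lf T B C Rw g k). set (P := Qf ga k).
  set (h := fun t => P t * ga t * (-B + C * k t)).
  set (m := fun t => P t * (ga t - g t) * (-B + k t * (C - L t))).
  assert (gL : gc L) by (apply gcL; auto).
  assert (gP : gc P) by (apply gcQ; auto).
  assert (gh : gc h).
  { intro x. unfold h. apply cmul. apply cmul; auto. apply cplus. apply cconst. apply cmul. apply cconst. auto. }
  assert (gm : gc m).
  { intro x. unfold m. apply cmul. apply cmul; auto. apply cminus; auto.
    apply cplus. apply cconst. apply cmul; auto. apply cminus; auto. apply cconst. }
  set (G := fun t => P t * L t + RInt h 0 t - RInt m 0 t).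
  assert (dG : forall t, is_derive G t 0).
  { intro t. eapply dchg. unfold G. apply dminus. apply dplus. apply dmul.
    apply dQ; auto. apply dL; auto. apply deriv_RInt_up; auto. apply deriv_RInt_up; auto.
    unfold h, m, L, P. ring. }
  assert (gG : gc G) by (apply (gc_deriv G (fun _ => 0)); intro; apply dG).
  assert (GT : G T = G 0) by (apply const_int; auto; intros; apply dG).
  unfold G in GT. rewrite !RInt_pt in GT.
  assert (P0 : P 0 = 1) by (unfold P, Qf; rewrite RInt_pt, Ropp_0, exp_0; auto).
  unfold L in GT. rewrite LT in GT. fold L in GT. rewrite P0 in GT.
  fold h m. lra.
Qed.

Definition psi1 (phi : R) := ((Rabs phi - phi)/2) / (1 + (Rabs phi - phi)/2).
Definition psi2 (phi : R) := ((Rabs phi + phi)/2) / (1 + (Rabs phi + phi)/2).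
Definition gaf (gv phi : R) := gv * (1 - psi2 phi) + (1 - gv) * psi1 phi.

Lemma psi_neg phi : phi < 0 -> psi2 phi = 0 /\ 0 < psi1 phi.
Proof.
  intros. unfold psi1, psi2. rewrite Rabs_left by lra.
  replace ((- phi + phi)/2) with 0 by field. split. field.
  apply Rdiv_lt_0_compat; lra.
Qed.
Lemma psi_pos phi : 0 <= phi -> psi1 phi = 0 /\ 0 <= psi2 phi.
Proof.
  intros. unfold psi1, psi2. rewrite Rabs_pos_eq by lra.
  replace ((phi - phi)/2) with 0 by field. split. field.
  apply Rle_mult_inv_pos; lra.
Qed.
Lemma psi_pos' phi : 0 < phi -> 0 < psi2 phi.
Proof. intros. unfold psi2. rewrite Rabs_pos_eq by lra. apply Rdiv_lt_0_compat; lra. Qed.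
Lemma psi_le1 phi : 0 <= psi1 phi <= 1 /\ 0 <= psi2 phi <= 1.
Proof.
  assert (0 <= Rabs phi - phi) by (unfold Rabs; destruct Rcase_abs; lra).
  assert (0 <= Rabs phi + phi) by (unfold Rabs; destruct Rcase_abs; lra).
  unfold psi1, psi2. split; split.
  - apply Rle_mult_inv_pos; lra.
  - apply Rmult_le_reg_r with (1 + (Rabs phi - phi) / 2). lra.
    unfold Rdiv at 1. rewrite Rmult_assoc, Rinv_l by lra. lra.
  - apply Rle_mult_inv_pos; lra.
  - apply Rmult_le_reg_r with (1 + (Rabs phi + phi) / 2). lra.
    unfold Rdiv at 1. rewrite Rmult_assoc, Rinv_l by lra. lra.
Qed.

Lemma gaf_bnd gv phi : 0 <= gv <= 1 -> 0 <= gaf gv phi <= 1.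
Proof. intros. destruct (psi_le1 phi). unfold gaf. split; nra. Qed.

Lemma gaf_sign gv phi : 0 <= gv <= 1 -> (gaf gv phi - gv) * phi <= 0.
Proof.
  intros. unfold gaf. destruct (Rlt_dec phi 0) as [h|h].
  - destruct (psi_neg _ h) as [-> ?].
    assert (0 <= (1 - gv) * psi1 phi) by (apply Rmult_le_pos; lra).
    replace ((gv * (1 - 0) + (1 - gv) * psi1 phi - gv) * phi) with (((1 - gv) * psi1 phi) * phi) by ring. nra.
  - apply Rnot_lt_le in h. destruct (psi_pos _ h) as [-> ?].
    assert (0 <= gv * psi2 phi) by (apply Rmult_le_pos; lra).
    replace ((gv * (1 - psi2 phi) + (1 - gv) * 0 - gv) * phi) with (- ((gv * psi2 phi) * phi)) by ring. nra.
Qed.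

Lemma gaf_zero gv phi : 0 <= gv <= 1 -> (gaf gv phi - gv) * phi = 0 ->
  (phi < 0 -> gv = 1) /\ (0 < phi -> gv = 0).
Proof.
  intros Hg E. unfold gaf in E. split; intro h.
  - destruct (psi_neg _ h) as [E2 E1]. rewrite E2 in E.
    assert ((1 - gv) * psi1 phi * phi = 0) by (rewrite <- E; ring).
    apply Rmult_integral in H as [H|H]; [apply Rmult_integral in H as [H|H]|]; lra.
  - destruct (psi_pos _ (Rlt_le _ _ h)) as [E1 _]. rewrite E1 in E.
    pose proof (psi_pos' _ h).
    assert (gv * psi2 phi * phi = 0).
    { replace (gv * psi2 phi * phi) with (- ((gv * (1 - psi2 phi) + (1 - gv) * 0 - gv) * phi)) by ring.
      rewrite E; ring. }
    apply Rmult_integral in H0 as [H0|H0]; [apply Rmult_integral in H0 as [H0|H0]|]; lra.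
Qed.

Lemma final_pt B C beta gv Iv lv : 0 < B -> 0 < beta -> 0 < Iv -> 0 <= gv <= 1 ->
  -B + beta * gv * Iv * (C - lv) <= 0 ->
  (-B + beta * gv * Iv * (C - lv) < 0 -> gv = 1) ->
  (C > lv -> gv = Rmin (B / (beta * Iv * (C - lv))) 1) /\ (C <= lv -> gv = 1).
Proof.
  intros HB Hb HI Hg Hle Hlt. split; intro h.
  - assert (Hd : 0 < beta * Iv * (C - lv)) by (apply Rmult_lt_0_compat; [apply Rmult_lt_0_compat|]; lra).
    destruct (Rlt_dec (-B + beta * gv * Iv * (C - lv)) 0) as [l|l].
    + rewrite (Hlt l) in l |- *. rewrite Rmin_right; auto.
      apply Rmult_le_reg_r with (beta * Iv * (C - lv)); auto.
      unfold Rdiv; rewrite (Rmult_assoc B), Rinv_l by lra. lra.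
    + assert (E : gv = B / (beta * Iv * (C - lv))).
      { apply Rmult_eq_reg_r with (beta * Iv * (C - lv)); [|lra].
        unfold Rdiv; rewrite (Rmult_assoc B), Rinv_l by lra. lra. }
      rewrite Rmin_left; lra.
  - apply Hlt. assert (0 <= beta * gv * Iv) by (apply Rmult_le_pos; [apply Rmult_le_pos|]; lra).
    nra.
Qed.

Theorem theorem1 (T beta gamma eps B C Rw : R)
  (HT : 0 < T) (Hbeta : 0 < beta) (Hgamma : 0 < gamma) (Heps : 0 < eps)
  (HB : 0 < B) (HC : 0 < C) (HR : 0 < Rw)
  (geq S I : R -> R)
  (Hgeq : admissible T (fun _ => 1) geq)
  (HSI : solves_SI beta gamma eps T geq S I)
  (Heq : forall ga P Peq,
      admissible T (fun _ => 1) ga ->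
      solves_P beta T geq I ga P ->
      solves_P beta T geq I geq Peq ->
      Jcost beta B C Rw T geq I geq Peq <= Jcost beta B C Rw T geq I ga P) :
  exists lam : R -> R,
    cont_on T lam /\ lam T = - Rw /\
    (forall t, 0 <= t <= T ->
       (C > lam t -> geq t = Rmin (B / (beta * I t * (C - lam t))) 1) /\
       (C <= lam t -> geq t = 1)) /\
    S 0 = 1 - eps /\ I 0 = eps /\
    (forall t, 0 < t < T ->
       is_derive S t (- beta * (geq t)^2 * S t * I t) /\
       is_derive I t (beta * (geq t)^2 * S t * I t - gamma * I t) /\
       is_derive lam t (geq t * (B - beta * I t * geq t * (C - lam t)))).
Proof.
  destruct Hgeq as [gcont gbnd].
  destruct HSI as (Scont & Icont & S0 & I0 & Hd).
  set (g := ext T geq). set (Ie := ext T I). set (Se := ext T S).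
  assert (gg : gc g) by (apply cont_ext; auto; lra).
  assert (gI : gc Ie) by (apply cont_ext; auto; lra).
  assert (gS : gc Se) by (apply cont_ext; auto; lra).
  assert (g01 : forall t, 0 <= g t <= 1).
  { intro t. unfold g, ext. apply gbnd. apply clamp_in. lra. }
  assert (Eg : forall t, 0 <= t <= T -> g t = geq t) by (intros; apply ext_eq; auto).
  assert (EI : forall t, 0 <= t <= T -> Ie t = I t) by (intros; apply ext_eq; auto).
  assert (ES : forall t, 0 <= t <= T -> Se t = S t) by (intros; apply ext_eq; auto).
  set (k := fun t => beta * g t * Ie t).
  assert (gk : gc k) by (intro; unfold k; apply cmul; [apply cmul|]; auto; apply cconst).
  assert (Ipos : forall t, 0 <= t <= T -> 0 < I t).
  { apply (pos_lin T I (fun t => beta * g t ^ 2 * Se t - gamma)); auto; try lra.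
    - intro x. apply cminus. apply cmul. apply cmul. apply cconst.
      apply (cmul g (fun y => g y ^ 1)); auto. apply (cmul g (fun _ => 1)); auto. apply cconst.
      auto. apply cconst.
    - intros t Ht. eapply dchg. apply Hd; auto.
      rewrite Eg, ES by lra. ring. }
  set (lam := Lf T B C Rw g k).
  assert (glam : gc lam) by (apply gcL; auto).
  set (phi := fun t => -B + k t * (C - lam t)).
  assert (gphi : gc phi).
  { intro x; unfold phi. apply cplus. apply cconst. apply cmul; auto. apply cminus; auto. apply cconst. }
  set (ga := fun t => gaf (g t) (phi t)).
  assert (gga : gc ga).
  { intro x; unfold ga, gaf, psi1, psi2.
    assert (gab : continuous (fun y => Rabs (phi y)) x) by (apply cabs; auto).
    assert (Hn : forall y, 0 <= (Rabs (phi y) - phi y) / 2) by (intro; unfold Rabs; destruct Rcase_abs; lra).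
    assert (Hp : forall y, 0 <= (Rabs (phi y) + phi y) / 2) by (intro; unfold Rabs; destruct Rcase_abs; lra).
    apply cplus; apply cmul; auto; try (apply cminus; [apply cconst|]); try auto.
    - apply cmul. apply cmul. apply cplus; auto. apply cconst.
      apply cinv. apply cplus. apply cconst. apply cmul. apply cplus; auto. apply cconst.
      specialize (Hp x). lra.
    - apply cmul. apply cmul. apply cminus; auto. apply cconst.
      apply cinv. apply cplus. apply cconst. apply cmul. apply cminus; auto. apply cconst.
      specialize (Hn x). lra. }
  set (m := fun t => Qf ga k t * (ga t - g t) * phi t).
  assert (gm : gc m).
  { intro x; unfold m. apply cmul. apply cmul. apply gcQ; auto. apply cminus; auto. auto. }
  assert (Pga : solves_P beta T geq I ga (Qf ga k)).
  { split. apply cont_on_gc, gcQ; auto. split.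
    unfold Qf. rewrite RInt_pt, Ropp_0, exp_0. auto.
    intros t Ht. eapply dchg. apply dQ; auto. unfold k. rewrite Eg, EI by lra. first [ring | (change (@eq R _ _); ring)]. }
  assert (Pg : solves_P beta T geq I geq (Qf g k)).
  { split. apply cont_on_gc, gcQ; auto. split.
    unfold Qf. rewrite RInt_pt, Ropp_0, exp_0. auto.
    intros t Ht. eapply dchg. apply dQ; auto. unfold k. rewrite Eg, EI by lra. first [ring | (change (@eq R _ _); ring)]. }
  assert (Aga : admissible T (fun _ => 1) ga).
  { split. apply cont_on_gc; auto. intros; unfold ga; apply gaf_bnd; auto. }
  specialize (Heq _ _ _ Aga Pga Pg).
  unfold Jcost in Heq.
  rewrite (RInt_ext _ (fun t => Qf g k t * g t * (-B + C * k t))) in Heq.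
  2:{ intros x Hx. rewrite Rmin_left, Rmax_right in Hx by lra. unfold k. rewrite Eg, EI by lra. apply Rmult_eq_compat_l. ring. }
  rewrite (RInt_ext (fun t => Qf ga k t * ga t * (-B + C * beta * geq t * I t)) (fun t => Qf ga k t * ga t * (-B + C * k t))) in Heq.
  2:{ intros x Hx. rewrite Rmin_left, Rmax_right in Hx by lra. unfold k. rewrite Eg, EI by lra. apply Rmult_eq_compat_l. ring. }
  rewrite !(identity T B C Rw g k) in Heq by (auto; lra).
  fold lam in Heq.
  rewrite (RInt_ext _ (fun _ => 0)) in Heq.
  2:{ intros x _. rewrite Rminus_diag, Rmult_0_r, Rmult_0_l; reflexivity. }
  rewrite RInt_zero_fun in Heq.
  rewrite (RInt_ext _ m) in Heq.
  2:{ intros x _. unfold m, phi. reflexivity. }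
  assert (mle : forall t, 0 <= t <= T -> m t <= 0).
  { intros t _. unfold m. rewrite Rmult_assoc. pose proof (Qpos ga k t).
    pose proof (gaf_sign (g t) (phi t) (g01 t)). change (gaf (g t) (phi t)) with (ga t) in H0.
    set (u := (ga t - g t) * phi t) in *. set (q := Qf ga k t) in *. nra. }
  assert (m0 : forall t, 0 <= t <= T -> m t = 0) by (apply zero_int; auto; lra).
  assert (key : forall t, 0 <= t <= T -> phi t <= 0 /\ (phi t < 0 -> g t = 1)).
  { intros t Ht. specialize (m0 t Ht). unfold m in m0. rewrite Rmult_assoc in m0.
    apply Rmult_integral in m0 as [E|E]. pose proof (Qpos ga k t); lra.
    destruct (gaf_zero (g t) (phi t) (g01 t) E) as [Z1 Z2].
    split; auto. destruct (Rle_dec (phi t) 0); auto.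
    assert (g t = 0) by (apply Z2; lra). unfold phi, k in n. rewrite H in n. lra. }
  exists lam. split. apply cont_on_gc; auto. split. apply LT.
  split.
  { intros t Ht. destruct (key t Ht) as [K1 K2]. unfold phi, k in K1, K2.
    rewrite Eg, EI in K1, K2 by lra.
    apply final_pt; auto. }
  split; auto. split; auto.
  intros t Ht. destruct (Hd t Ht) as [D1 D2]. split; auto. split; auto.
  eapply dchg. apply dL; auto. unfold lam, k. rewrite Eg, EI by lra. ring.
Qed.
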